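(* Let $n\in\mathbb{N}$ and let $f\colon[0,1]^n\to[0,1]$ be an aggregation function. Let $[0,1]^n_*$ be the set of $\mathbf{a}\in[0,1]^n$ with $\mathbf{a}\neq(0,\dots,0)$ and $\mathbf{a}\neq(1,\dots,1)$, and for $\mathbf{a}=(a_0,\dots,a_{n-1})\in[0,1]^n_*$ put $J_{\mathbf{a}}=\{i:a_i\neq0\}$ and $h^f_{\mathbf{a}}(\mathbf{x})=G^n_{f(\mathbf{a})}(\mathbf{x})\wedge\bigwedge_{i\in J_{\mathbf{a}}}\chi_{a_i}(x_i)$. Then $f(\mathbf{x})=\bigvee_{\mathbf{a}\in[0,1]^n_*}h^f_{\mathbf{a}}(\mathbf{x})$ for all $\mathbf{x}\in[0,1]^n$.
   Context: An $n$-ary aggregation function on $[0,1]$ is a function $f\colon[0,1]^n\to[0,1]$ nondecreasing in each coordinate with $f(0,\dots,0)=0$ and $f(1,\dots,1)=1$. For $a\in[0,1]$, $\chi_a(x)=1$ if $x\ge a$ and $x\neq0$, and $\chi_a(x)=0$ otherwise. $\mathsf{Med}_b(x,y)$ is the median of $x,y,b$. For $b\in[0,1]$, $G^n_b\colon[0,1]^n\to[0,1]$ is defined inductively by $G^1_b(x_0)=\mathsf{Med}_b(\chi_0(x_0),\chi_1(x_0))$, $G^2_b(x_0,x_1)=\mathsf{Med}_b(\chi_0(x_0\vee x_1),\chi_1(x_0\wedge x_1))$, $G^{n+1}_b(x_0,\dots,x_n)=G^2_b(G^n_b(x_0,\dots,x_{n-1}),x_n)$ for $n\ge2$. *)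

(* Defs.v *)
From HB Require Import structures.
From mathcomp Require Import all_boot all_order all_algebra.
From mathcomp Require Import classical_sets reals.
Unset Strict Implicit. Unset Printing Implicit Defensive.
Import Order.TTheory GRing.Theory Num.Theory.
Local Open Scope ring_scope.
Local Open Scope classical_set_scope.

Section Defs.
Variable R : realType.

Definition in01 (x : R) : Prop := 0 <= x <= 1.

Definition cube (n : nat) : set ('I_n -> R) := [set x | forall i, in01 (x i)].

Definition upd {n} (x : 'I_n -> R) (i : 'I_n) (t : R) : 'I_n -> R :=
  fun j => if j == i then t else x j.

Definition aggregation (n : nat) (f : ('I_n -> R) -> R) : Prop :=
  [/\ forall x, cube n x -> in01 (f x),
      forall x i t, cube n x -> in01 t -> x i <= t -> f x <= f (upd x i t),
      f (fun _ => 0) = 0 &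
      f (fun _ => 1) = 1].

Definition chi (a x : R) : R := if (a <= x) && (x != 0) then 1 else 0.

Definition Med (b x y : R) : R := Num.max (Num.min x y) (Num.min (Num.max x y) b).

Definition G1 (b x0 : R) : R := Med b (chi 0 x0) (chi 1 x0).
Definition G2 (b x0 x1 : R) : R :=
  Med b (chi 0 (Num.max x0 x1)) (chi 1 (Num.min x0 x1)).

(* G^n_b on a list [x0; ...; x_{n-1}]; G^{n+1}(x0..xn) = G^2(G^n(x0..x_{n-1}), xn).
   The value on the empty list (n = 0) is irrelevant (no 0-ary aggregation
   function exists) and is set to 0. *)
Definition Gseq (b : R) (s : seq R) : R :=
  match s with
  | [::] => 0
  | [:: x0] => G1 b x0
  | x0 :: x1 :: t => foldl (G2 b) (G2 b x0 x1) t
  end.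

Definition G {n : nat} (b : R) (x : 'I_n -> R) : R :=
  Gseq b [seq x i | i <- enum 'I_n].

Definition cube_star (n : nat) : set ('I_n -> R) :=
  [set a | cube n a /\ a <> (fun _ => 0) /\ a <> (fun _ => 1)].

Definition hf (n : nat) (f : ('I_n -> R) -> R) (a x : 'I_n -> R) : R :=
  Num.min (G (f a) x) (\big[Num.min/1]_(i < n | a i != 0) chi (a i) (x i)).

End Defs.

Arguments hf {R n}.
Arguments G {R n}.
Arguments aggregation {R n}.

(* Main.v *)
Require Import Defs.
From HB Require Import structures.
From mathcomp Require Import all_boot all_order all_algebra.
From mathcomp Require Import boolp classical_sets reals.
Import Order.TTheory GRing.Theory Num.Theory.
Local Open Scope ring_scope.
Local Open Scope classical_set_scope.

Arguments chi {R}. Arguments G1 {R}. Arguments G2 {R}. Arguments Med {R}. Arguments in01 {R}. Arguments Gseq {R}. Arguments upd {R n}.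
Section S.
Variable R : realType.
Implicit Types (b y z : R).
Lemma NmaxE (x y : R) : Num.max x y = Order.max x y. Proof. by []. Qed.
Lemma NminE (x y : R) : Num.min x y = Order.min x y. Proof. by []. Qed.

Lemma chi0E y : 0 <= y -> chi 0 y = (y != 0)%:R.
Proof. by move=> y0; rewrite /chi y0; case: (y != 0). Qed.

Lemma chi1E y : y <= 1 -> chi 1 y = (y == 1)%:R.
Proof.
move=> y1; rewrite /chi; have [->|ne] := eqVneq y 1; first by rewrite lexx oner_eq0.
suff -> : (1 <= y) = false by [].
by apply/negbTE; rewrite -ltNge lt_neqAle ne y1.
Qed.

Lemma G2E b y z : in01 b -> in01 y -> in01 z ->
  G2 b y z = if (y == 0) && (z == 0) then 0 else if (y == 1) && (z == 1) then 1 else b.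
Proof.
move=> /andP[b0 b1] /andP[y0 y1] /andP[z0 z1].
rewrite /G2 /Med chi0E ?le_max ?y0 // chi1E ?ge_min ?y1 //.
have HA : (Num.max y z != 0) = ~~((y == 0) && (z == 0)).
  apply/idP/idP.
    by apply: contraNN => /andP[/eqP-> /eqP->]; rewrite maxxx.
  apply: contraNN => /eqP Hm; apply/andP; split; apply/eqP; apply: le_anti.
    by rewrite y0 -Hm le_max lexx.
  by rewrite z0 -Hm le_max lexx orbT.
have HB : (Num.min y z == 1) = ((y == 1) && (z == 1)).
  apply/idP/idP.
    move=> /eqP Hm; apply/andP; split; apply/eqP; apply: le_anti.
      by rewrite y1 -Hm ge_min lexx.
    by rewrite z1 -Hm ge_min lexx orbT.
  by move=> /andP[/eqP-> /eqP->]; rewrite minxx.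
rewrite HA HB.
case: ((y == 0) && (z == 0)) / andP => [[/eqP-> /eqP->]|_].
  by rewrite eq_sym oner_eq0 /= minxx maxxx min_l // max_l.
case: ((y == 1) && (z == 1)) => /=.
  by rewrite minxx maxxx (min_r b1) (max_l b1).
by rewrite (@min_r _ _ 1 0) ?ler01 // (@max_l _ _ 1 0) ?ler01 // (min_r b1) (max_r b0).
Qed.

Definition v b (s : seq R) : R :=
  if all (fun y => y == 0) s then 0 else if all (fun y => y == 1) s then 1 else b.

Lemma v01 b s : in01 b -> in01 (v b s).
Proof. by rewrite /v => hb; case: ifP => _; [|case: ifP => _] => //; rewrite /in01 ?lexx ?ler01. Qed.

Lemma G1E b y : in01 b -> in01 y -> G1 b y = v b [:: y].
Proof.
move=> hb hy; have -> : G1 b y = G2 b y y by rewrite /G1 /G2 maxxx minxx.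
by rewrite G2E // /v /= !andbT !andbb.
Qed.

Lemma G2v b x0 x1 : in01 b -> in01 x0 -> in01 x1 -> G2 b x0 x1 = v b [:: x0; x1].
Proof. by move=> *; rewrite G2E // /v /= !andbT. Qed.

Lemma o01 : (0 == 1 :> R) = false. Proof. by rewrite eq_sym oner_eq0. Qed.
Lemma o10 : (1 == 0 :> R) = false. Proof. by rewrite oner_eq0. Qed.

Lemma step b p z : in01 b -> in01 z -> p != [::] -> G2 b (v b p) z = v b (rcons p z).
Proof.
move=> hb hz pn; rewrite G2E ?(v01 _ hb) //.
rewrite /v !all_rcons.
have Hn : ~~ (all (fun y => y == 0) p && all (fun y => y == 1) p).
  case: p pn => // y p _ /=; apply/negP => /andP[/andP[/eqP-> _] /andP[]].
  by rewrite o01.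
case: (all (fun y => y == 0) p) Hn; case: (all (fun y => y == 1) p) => //= _;
  rewrite ?eqxx ?o01 ?o10 /= ?andbT ?andbF //.
  by case: (b =P 0) => [->|hb0] /=; [case: ifP => // _; rewrite o01 | case: (b =P 1) => [->|] /=; [case: ifP|]].
by apply: v01.
Qed.

Lemma foldv b t p : in01 b -> (forall y, y \in t -> in01 y) -> p != [::] ->
  foldl (G2 b) (v b p) t = v b (cat p t).
Proof.
move=> hb; elim: t p => [|z t IH] p ht pn /=; first by rewrite cats0.
rewrite step //; last by apply: ht; rewrite mem_head.
rewrite -cat_rcons; apply: IH; last by case: (p).
by move=> y yt; apply: ht; rewrite in_cons yt orbT.
Qed.

Lemma GseqE b (s : seq R) : in01 b -> (forall y, y \in s -> in01 y) -> s != [::] -> Gseq b s = v b s.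
Proof.
move=> hb hs; case: s hs => [//|x0 [|x1 t]] hs _ /=.
  by rewrite G1E //; apply: hs; rewrite mem_head.
have h0 : in01 x0 by apply: hs; rewrite mem_head.
have h1 : in01 x1 by apply: hs; rewrite !in_cons eqxx orbT.
rewrite G2v // (foldv b t [:: x0; x1]) //.
by move=> y yt; apply: hs; rewrite !in_cons yt !orbT.
Qed.

Lemma allmapP n (x : 'I_n -> R) c :
  reflect (forall i, x i = c) (all (fun y => y == c) [seq x i | i <- enum 'I_n]).
Proof.
rewrite all_map; apply: (iffP allP) => H i.
  by apply/eqP; apply: H; rewrite mem_enum.
by move=> _ /=; rewrite H.
Qed.

Lemma GE n b (x : 'I_n -> R) : (0 < n)%N -> in01 b -> cube R n x ->
  G b x = v b [seq x i | i <- enum 'I_n].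
Proof.
move=> npos hb hx; rewrite /G GseqE //.
  by move=> y /mapP[i _ ->]; apply: hx.
by rewrite -size_eq0 size_map size_enum_ord -lt0n.
Qed.


Lemma chi01 a y : 0 <= chi a y.
Proof. by rewrite /chi; case: ifP. Qed.

Lemma bigE n (a x : 'I_n -> R) : cube R n a -> cube R n x ->
  \big[Num.min/1]_(i < n | a i != 0) chi (a i) (x i) =
  if [forall i, (a i != 0) ==> (a i <= x i)] then 1 else 0.
Proof.
move=> ha hx; case: ifP => H.
  apply: (big_ind (fun y => y = 1)) => //; first by move=> u w -> ->; rewrite minxx.
  move=> i ai0; have := forallP H i; rewrite ai0 /= => le.
  rewrite /chi le /=; suff -> : x i != 0 by [].
  have /andP[a0 _] := ha i.
  by rewrite gt_eqF // (lt_le_trans _ le) // lt_neqAle eq_sym ai0 a0.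
move/negbT: H; rewrite negb_forall => /existsP[i]; rewrite negb_imply => /andP[ai0 nle].
rewrite (bigD1 i) //= {1}/chi (negbTE nle) /=.
apply: min_l; apply: (big_ind (fun y => 0 <= y)) => //.
  by move=> u w u0 w0; rewrite le_min u0 w0.
by move=> j _; apply: chi01.
Qed.

Lemma mono n (f : ('I_n -> R) -> R) a x : aggregation f -> cube R n a -> cube R n x ->
  (forall i, a i <= x i) -> f a <= f x.
Proof.
move=> [_ Hm _ _] ha hx hax.
pose y (k : nat) := fun i : 'I_n => if (i < k)%N then x i else a i.
have yc k : cube R n (y k) by move=> i; rewrite /y; case: ifP.
suff H : forall k, (k <= n)%N -> f a <= f (y k).
  have := H n (leqnn n).
  by have -> : y n = x by apply: funext => i; rewrite /y ltn_ord.
elim=> [_|k IH kn].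
  by have -> : y 0%N = a by apply: funext => i; rewrite /y ltn0.
apply: (le_trans (IH (ltnW kn))).
have -> : y k.+1 = upd (y k) (Ordinal kn) (x (Ordinal kn)).
  apply: funext => j; rewrite /y /upd ltnS leq_eqVlt.
  case: (j =P Ordinal kn) => [->|hj] /=; first by rewrite eqxx.
  suff -> : (nat_of_ord j == k) = false by [].
  by apply/negP => /eqP hjk; apply: hj; apply: val_inj.
apply: Hm => //; rewrite /y /= ltnn //.
Qed.

Lemma sup_max (S : set R) m : S m -> (forall y, S y -> y <= m) -> sup S = m.
Proof.
move=> Sm ub; apply: le_anti; rewrite ge_sup //=; last by exists m.
by apply: ub_le_sup => //; exists m.
Qed.

Lemma hfE n (f : ('I_n -> R) -> R) a x : (0 < n)%N -> in01 (f a) ->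
  cube R n a -> cube R n x ->
  hf f a x = if [forall i, (a i != 0) ==> (a i <= x i)]
             then v (f a) [seq x i | i <- enum 'I_n] else 0.
Proof.
move=> npos hfa ha hx; rewrite /hf bigE // GE //.
have /andP[v0 v1] : in01 (v (f a) [seq x i | i <- enum 'I_n]) by apply: v01.
by case: ifP => _; [apply: min_l | apply: min_r].
Qed.

End S.
Arguments v {R}.

Theorem lemma3 (R : realType) (n : nat) (f : ('I_n -> R) -> R) :
  aggregation f ->
  forall x : 'I_n -> R, cube R n x ->
    f x = sup [set hf f a x | a in cube_star R n].
Proof.
move=> Hf; have [Hr _ H0 H1] := Hf; move=> x hx.
have [n0|npos] := posnP n.
  subst n; exfalso.
  have E : (fun _ : 'I_0 => (0:R)) = (fun _ => 1) by apply: funext => -[m]; rewrite ltn0.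
  by move: H1; rewrite -E H0 => /eqP; rewrite eq_sym oner_eq0.
have i0 : 'I_n := Ordinal npos.
pose a0 := fun _ : 'I_n => (2^-1 : R).
have a0s : cube_star R n a0.
  split; first by move=> i; rewrite /in01 /a0 invr_ge0 ler0n /= invf_le1 // ler1n.
  split => /(congr1 (fun g => g i0)) /eqP; rewrite /a0 ?invr_eq0 ?pnatr_eq0 //.
  by rewrite invr_eq1 ?pnatr_eq1.
set s := [seq x i | i <- enum 'I_n].
have fa01 : forall a, cube_star R n a -> in01 (f a) by move=> a [ca _]; apply: Hr.
have fx01 := Hr x hx.
case: (boolP (all (fun y => y == 0) s)) => A0.
  have xE : x = (fun _ => 0) by apply: funext => i; move/allmapP: (A0); apply.
  rewrite {1}xE H0; apply/esym/sup_max.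
    exists a0 => //; rewrite (@hfE R _ _ _ _ npos (fa01 _ a0s) (proj1 a0s) hx).
    by rewrite /v A0; case: ifP.
  move=> y [a sa <-]; rewrite (@hfE R _ _ _ _ npos (fa01 _ sa) (proj1 sa) hx).
  by rewrite /v A0; case: ifP.
case: (boolP (all (fun y => y == 1) s)) => A1.
  have xE : x = (fun _ => 1) by apply: funext => i; move/allmapP: (A1); apply.
  rewrite {1}xE H1; apply/esym/sup_max.
    exists a0 => //; rewrite (@hfE R _ _ _ _ npos (fa01 _ a0s) (proj1 a0s) hx).
    rewrite /v (negbTE A0) A1; case: ifP => // /negP []; apply/forallP => i.
    by rewrite xE; apply/implyP => _; rewrite /a0 invf_le1 // ler1n.
  move=> y [a sa <-]; rewrite (@hfE R _ _ _ _ npos (fa01 _ sa) (proj1 sa) hx).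
  by rewrite /v (negbTE A0) A1; case: ifP => _ //; rewrite ler01.
have xs : cube_star R n x.
  split => //; split => xE; [move: A0|move: A1] => /negP []; apply/allmapP => i; by rewrite xE.
apply/esym/sup_max.
  exists x => //; rewrite (@hfE R _ _ _ _ npos fx01 hx hx) /v (negbTE A0) (negbTE A1).
  case: ifP => // /negP []; apply/forallP => i; exact/implyP.
move=> y [a sa <-]; rewrite (@hfE R _ _ _ _ npos (fa01 _ sa) (proj1 sa) hx).
rewrite /v (negbTE A0) (negbTE A1); case: ifP => H; last by case/andP: fx01.
apply: (@mono R n f a x Hf) => //; first by case: sa.
move=> i; have := forallP H i; case: (a i =P 0) => [->|_] /= //.
by case/andP: (hx i).
Qed.
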